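(* Let $(N_r)_{r\in\mathbb{Z}}$ be the Narayana sequence. For every integer $a$ put $p_a=N_a+3N_{a-2}$, and for positive integers $a$ put $q_a=-p_{-a}$. Then for every positive integer $a$ and every integer $m$ with $a<m$, $$N_{m}=p_{a}N_{m-a}+q_{a}N_{m-2a}+N_{m-3a}.$$
   Context: The Narayana sequence $(N_r)_{r\in\mathbb{Z}}$ is defined by $N_0=0$, $N_1=N_2=1$ and $N_r=N_{r-1}+N_{r-3}$ for all integers $r$ (extended to negative indices via $N_{r-3}=N_r-N_{r-1}$). *)

(* Defs.v *)
From Stdlib Require Import ZArith.
Open Scope Z_scope.

(* Forward: (N_n, N_{n+1}, N_{n+2}) for n : nat. *)
Fixpoint nar_fwd (n : nat) : Z * Z * Z :=
  match n with
  | O => (0, 1, 1)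
  | S k => let '(x, y, z) := nar_fwd k in (y, z, z + x)
  end.

(* Backward: (N_{-n}, N_{-n+1}, N_{-n+2}) for n : nat,
   using N_{r-3} = N_r - N_{r-1}. *)
Fixpoint nar_bwd (n : nat) : Z * Z * Z :=
  match n with
  | O => (0, 1, 1)
  | S k => let '(x, y, z) := nar_bwd k in (z - y, x, y)
  end.

(* The Narayana sequence N : Z -> Z, N_0=0, N_1=N_2=1, N_r = N_{r-1}+N_{r-3}. *)
Definition Narayana (r : Z) : Z :=
  match r with
  | Z0 => 0
  | Zpos p => let '(x, _, _) := nar_fwd (Pos.to_nat p) in x
  | Zneg p => let '(x, _, _) := nar_bwd (Pos.to_nat p) in x
  end.

Definition p_ (a : Z) : Z := Narayana a + 3 * Narayana (a - 2).
Definition q_ (a : Z) : Z := - p_ (- a).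

Example N_check : List.map Narayana (List.cons (-4) (List.cons (-3) (List.cons (-2) (List.cons (-1) (List.cons 0 (List.cons 1 (List.cons 2 (List.cons 3 (List.cons 6 List.nil)))))))))
  = List.cons (-1) (List.cons 0 (List.cons 1 (List.cons 0 (List.cons 0 (List.cons 1 (List.cons 1 (List.cons 1 (List.cons 4 List.nil)))))))).
Proof. reflexivity. Qed.

(* Main.v *)
Require Import Defs.
From Stdlib Require Import ZArith Lia.
Open Scope Z_scope.

Local Notation N := Narayana.

Definition g1 n := fst (fst (nar_fwd n)).
Definition g2 n := snd (fst (nar_fwd n)).
Definition g3 n := snd (nar_fwd n).

Lemma fwd_S n : nar_fwd (S n) = (g2 n, g3 n, g3 n + g1 n).
Proof. simpl; unfold g1, g2, g3; destruct (nar_fwd n) as [[x y] z]; reflexivity. Qed.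

Lemma g1_rec n : g1 (S (S (S n))) = g1 (S (S n)) + g1 n.
Proof.
  assert (E1: forall k, g1 (S k) = g2 k) by (intro k; unfold g1 at 1; rewrite fwd_S; reflexivity).
  assert (E2: forall k, g2 (S k) = g3 k) by (intro k; unfold g2 at 1; rewrite fwd_S; reflexivity).
  assert (E3: forall k, g3 (S k) = g3 k + g1 k) by (intro k; unfold g3 at 1; rewrite fwd_S; reflexivity).
  rewrite !E1, !E2, E3; reflexivity.
Qed.

Lemma N_nat n : N (Z.of_nat n) = g1 n.
Proof.
  destruct n. reflexivity.
  change (Z.of_nat (S n)) with (Zpos (Pos.of_succ_nat n)).
  unfold Narayana; rewrite SuccNat2Pos.id_succ; unfold g1.
  destruct (nar_fwd (S n)) as [[x y] z]; reflexivity.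
Qed.

Definition h1 n := fst (fst (nar_bwd n)).
Definition h2 n := snd (fst (nar_bwd n)).
Definition h3 n := snd (nar_bwd n).

Lemma bwd_S n : nar_bwd (S n) = (h3 n - h2 n, h1 n, h2 n).
Proof. simpl; unfold h1, h2, h3; destruct (nar_bwd n) as [[x y] z]; reflexivity. Qed.

Lemma h1_rec n : h1 (S (S (S n))) = h1 n - h1 (S n).
Proof.
  assert (E1: forall k, h1 (S k) = h3 k - h2 k) by (intro k; unfold h1 at 1; rewrite bwd_S; reflexivity).
  assert (E2: forall k, h2 (S k) = h1 k) by (intro k; unfold h2 at 1; rewrite bwd_S; reflexivity).
  assert (E3: forall k, h3 (S k) = h2 k) by (intro k; unfold h3 at 1; rewrite bwd_S; reflexivity).
  rewrite (E1 (S (S n))), E3, !E2. reflexivity.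
Qed.

Lemma N_neg n : N (- Z.of_nat n) = h1 n.
Proof.
  destruct n. reflexivity.
  change (- Z.of_nat (S n)) with (Zneg (Pos.of_succ_nat n)).
  unfold Narayana; rewrite SuccNat2Pos.id_succ; unfold h1.
  destruct (nar_bwd (S n)) as [[x y] z]; reflexivity.
Qed.

Lemma rec r : N (r + 3) = N (r + 2) + N r.
Proof.
  destruct (Z_le_gt_dec 0 r).
  - set (n := Z.to_nat r).
    replace (r + 3) with (Z.of_nat (S (S (S n)))) by lia.
    replace (r + 2) with (Z.of_nat (S (S n))) by lia.
    replace (N r) with (g1 n) by (rewrite <- N_nat; f_equal; lia).
    rewrite !N_nat; apply g1_rec.
  - destruct (Z.eq_dec r (-1)); [subst; reflexivity|].
    destruct (Z.eq_dec r (-2)); [subst; reflexivity|].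
    set (k := Z.to_nat (- r - 3)).
    replace (r + 3) with (- Z.of_nat k) by lia.
    replace (r + 2) with (- Z.of_nat (S k)) by lia.
    replace (N r) with (h1 (S (S (S k)))) by (rewrite <- N_neg; f_equal; lia).
    rewrite !N_neg, h1_rec; ring.
Qed.

Lemma recE x a b : a = x + 3 -> b = x + 2 -> N a = N b + N x.
Proof. intros -> ->; apply rec. Qed.

Lemma zero (f : Z -> Z) : (forall r, f (r + 3) = f (r + 2) + f r) ->
  f 0 = 0 -> f 1 = 0 -> f 2 = 0 -> forall r, f r = 0.
Proof.
  intros H h0 h1 h2.
  assert (F: forall n:nat, f (Z.of_nat n) = 0 /\ f (Z.of_nat n + 1) = 0 /\ f (Z.of_nat n + 2) = 0).
  { induction n; [simpl; auto|]. rewrite Nat2Z.inj_succ. destruct IHn as [A [B C]].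
    unfold Z.succ. split; [auto|split].
    - replace (Z.of_nat n + 1 + 1) with (Z.of_nat n + 2) by ring; auto.
    - replace (Z.of_nat n + 1 + 2) with (Z.of_nat n + 3) by ring. rewrite H, C, A; reflexivity. }
  assert (B: forall n:nat, f (- Z.of_nat n) = 0 /\ f (- Z.of_nat n + 1) = 0 /\ f (- Z.of_nat n + 2) = 0).
  { induction n; [simpl; auto|]. destruct IHn as [A [B C]]. rewrite Nat2Z.inj_succ.
    pose proof (H (- Z.succ (Z.of_nat n))) as Hx.
    replace (- Z.succ (Z.of_nat n) + 3) with (- Z.of_nat n + 2) in Hx by lia.
    replace (- Z.succ (Z.of_nat n) + 2) with (- Z.of_nat n + 1) in Hx by lia.
    replace (- Z.succ (Z.of_nat n) + 1) with (- Z.of_nat n) by lia.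
    replace (- Z.succ (Z.of_nat n) + 2) with (- Z.of_nat n + 1) by lia.
    split; [lia|auto]. }
  intros r; destruct (Z_le_gt_dec 0 r).
  - replace r with (Z.of_nat (Z.to_nat r)) by lia; apply F.
  - replace r with (- Z.of_nat (Z.to_nat (- r))) by lia; apply B.
Qed.

Lemma add n s : N (n + s) = N s * N (n - 2) + N (s + 1) * (N n - N (n - 1)) + N (s + 2) * N (n - 1).
Proof.
  apply Z.sub_move_0_r. revert s.
  apply (zero (fun s => N (n + s) - (N s * N (n - 2) + N (s + 1) * (N n - N (n - 1)) + N (s + 2) * N (n - 1)))).
  - intro r.
    rewrite (recE (n + r) (n + (r + 3)) (n + (r + 2))) by ring.
    rewrite (recE r (r + 3) (r + 2)) by ring.
    rewrite (recE (r + 1) (r + 3 + 1) (r + 2 + 1)) by ring.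
    rewrite (recE (r + 2) (r + 3 + 2) (r + 2 + 2)) by ring.
    replace (r + 2 + 1) with (r + 3) by ring.
    rewrite (recE r (r + 3) (r + 2)) by ring.
    ring.
  - rewrite Z.add_0_r. change (N 0) with 0. change (N (0+1)) with 1. change (N (0+2)) with 1. ring.
  - change (N 1) with 1. change (N (1+1)) with 1. change (N (1+2)) with 1.
    rewrite (recE (n - 2) (n + 1) (n - 2 + 2)) by ring.
    replace (n - 2 + 2) with n by ring. ring.
  - change (N 2) with 1. change (N (2+1)) with 1. change (N (2+2)) with 2.
    rewrite (recE (n - 1) (n + 2) (n - 1 + 2)) by ring.
    rewrite (recE (n - 2) (n - 1 + 2) (n - 2 + 2)) by ring.
    replace (n - 2 + 2) with n by ring. ring.
Qed.

Lemma addG n s t a b c d : a = n - 2 -> b = n - 1 -> c = s + 1 -> d = s + 2 -> t = n + s ->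
  N t = N s * N a + N c * (N n - N b) + N d * N b.
Proof. intros -> -> -> -> ->; apply add. Qed.

Lemma Neq x y : x = y -> N x = N y.
Proof. intros ->; reflexivity. Qed.

Record V := mkV {v1 : Z; v2 : Z; v3 : Z}.
Record M := mkM {m11 : Z; m12 : Z; m13 : Z; m21 : Z; m22 : Z; m23 : Z; m31 : Z; m32 : Z; m33 : Z}.

Definition mv (A : M) (v : V) : V :=
  mkV (m11 A * v1 v + m12 A * v2 v + m13 A * v3 v)
      (m21 A * v1 v + m22 A * v2 v + m23 A * v3 v)
      (m31 A * v1 v + m32 A * v2 v + m33 A * v3 v).

Definition mm (A B : M) : M :=
  mkM (m11 A * m11 B + m12 A * m21 B + m13 A * m31 B)
      (m11 A * m12 B + m12 A * m22 B + m13 A * m32 B)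
      (m11 A * m13 B + m12 A * m23 B + m13 A * m33 B)
      (m21 A * m11 B + m22 A * m21 B + m23 A * m31 B)
      (m21 A * m12 B + m22 A * m22 B + m23 A * m32 B)
      (m21 A * m13 B + m22 A * m23 B + m23 A * m33 B)
      (m31 A * m11 B + m32 A * m21 B + m33 A * m31 B)
      (m31 A * m12 B + m32 A * m22 B + m33 A * m32 B)
      (m31 A * m13 B + m32 A * m23 B + m33 A * m33 B).

Definition trM (A : M) := m11 A + m22 A + m33 A.
Definition e2M (A : M) :=
  (m11 A * m22 A - m12 A * m21 A) + (m11 A * m33 A - m13 A * m31 A) + (m22 A * m33 A - m23 A * m32 A).
Definition detM (A : M) :=
  m11 A * (m22 A * m33 A - m23 A * m32 A) - m12 A * (m21 A * m33 A - m23 A * m31 A)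
  + m13 A * (m21 A * m32 A - m22 A * m31 A).

(* trace of adj(A) * X *)
Definition tadj (A X : M) :=
  (m22 A * m33 A - m23 A * m32 A) * m11 X - (m12 A * m33 A - m13 A * m32 A) * m21 X
  + (m12 A * m23 A - m13 A * m22 A) * m31 X
  - (m21 A * m33 A - m23 A * m31 A) * m12 X + (m11 A * m33 A - m13 A * m31 A) * m22 X
  - (m11 A * m23 A - m13 A * m21 A) * m32 X
  + (m21 A * m32 A - m22 A * m31 A) * m13 X - (m11 A * m32 A - m12 A * m31 A) * m23 X
  + (m11 A * m22 A - m12 A * m21 A) * m33 X.

Lemma tadj_mm A B : tadj A (mm A B) = detM A * trM B.
Proof. destruct A, B; unfold tadj, mm, detM, trM; cbn; ring. Qed.

Lemma tadj_I A : tadj A (mkM 1 0 0 0 1 0 0 0 1) = e2M A.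
Proof. destruct A; unfold tadj, e2M; cbn; ring. Qed.

Lemma CH A v : v1 (mv A (mv A (mv A v))) - trM A * v1 (mv A (mv A v)) + e2M A * v1 (mv A v)
  - detM A * v1 v = 0.
Proof. destruct A, v; unfold mv, trM, e2M, detM; cbn; ring. Qed.

Definition P (n : Z) : M :=
  mkM (N (n - 2)) (N n - N (n - 1)) (N (n - 1))
      (N (n - 1)) (N (n + 1) - N n) (N n)
      (N n) (N (n + 2) - N (n + 1)) (N (n + 1)).

Definition w (r : Z) : V := mkV (N r) (N (r + 1)) (N (r + 2)).

Lemma mvP n s t : t = n + s -> mv (P n) (w s) = w t.
Proof.
  intros ->. unfold mv, P, w; cbn [v1 v2 v3 m11 m12 m13 m21 m22 m23 m31 m32 m33].
  f_equal.
  - rewrite (addG n s (n + s) (n - 2) (n - 1) (s + 1) (s + 2)) by ring; ring.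
  - rewrite (addG (n + 1) s (n + s + 1) (n - 1) n (s + 1) (s + 2)) by ring; ring.
  - rewrite (addG (n + 2) s (n + s + 2) n (n + 1) (s + 1) (s + 2)) by ring; ring.
Qed.

Lemma trP a : trM (P a) = p_ a.
Proof.
  unfold trM, P, p_; cbn [m11 m22 m33].
  rewrite (recE (a - 2) (a + 1) (a - 2 + 2)) by ring.
  replace (a - 2 + 2) with a by ring. ring.
Qed.

Definition Cs (A : M) : M :=
  mkM (m21 A) (m22 A) (m23 A) (m31 A) (m32 A) (m33 A)
      (m31 A + m11 A) (m32 A + m12 A) (m33 A + m13 A).

Lemma det_Cs A : detM (Cs A) = detM A.
Proof. destruct A; unfold detM, Cs; cbn; ring. Qed.

Lemma P_succ n : P (n + 1) = Cs (P n).
Proof.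
  unfold Cs, P; cbn [m11 m12 m13 m21 m22 m23 m31 m32 m33].
  replace (n + 1 - 2) with (n - 1) by ring.
  replace (n + 1 - 1) with n by ring.
  replace (n + 1 + 1) with (n + 2) by ring.
  rewrite (recE n (n + 1 + 2) (n + 2)) by ring.
  rewrite (recE (n - 1) (n + 2) (n + 1)) by ring.
  rewrite (recE (n - 2) (n + 1) (n)) by ring.
  f_equal; ring.
Qed.

Lemma detP n : detM (P n) = 1.
Proof.
  assert (S: forall n, detM (P (n + 1)) = detM (P n)) by (intro; rewrite P_succ; apply det_Cs).
  assert (F: forall k : nat, detM (P (Z.of_nat k)) = 1).
  { induction k. reflexivity. rewrite Nat2Z.inj_succ; unfold Z.succ; rewrite S; auto. }
  assert (B: forall k : nat, detM (P (- Z.of_nat k)) = 1).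
  { induction k. reflexivity. rewrite <- IHk. rewrite Nat2Z.inj_succ.
    replace (- Z.of_nat k) with (- Z.succ (Z.of_nat k) + 1) by lia. rewrite S; reflexivity. }
  destruct (Z_le_gt_dec 0 n).
  - replace n with (Z.of_nat (Z.to_nat n)) by lia; apply F.
  - replace n with (- Z.of_nat (Z.to_nat (- n))) by lia; apply B.
Qed.

Lemma row1 n s x y z t : x = s -> y = s + 1 -> z = s + 2 -> t = n + s ->
  N (n - 2) * N x + (N n - N (n - 1)) * N y + N (n - 1) * N z = N t.
Proof.
  intros -> -> -> ->. pose proof (f_equal v1 (mvP n s (n + s) eq_refl)) as H.
  unfold mv, P, w in H; cbn [v1 v2 v3 m11 m12 m13 m21 m22 m23 m31 m32 m33] in H; exact H.
Qed.
Lemma row2 n s x y z t : x = s -> y = s + 1 -> z = s + 2 -> t = n + s + 1 ->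
  N (n - 1) * N x + (N (n + 1) - N n) * N y + N n * N z = N t.
Proof.
  intros -> -> -> ->. pose proof (f_equal v2 (mvP n s (n + s) eq_refl)) as H.
  unfold mv, P, w in H; cbn [v1 v2 v3 m11 m12 m13 m21 m22 m23 m31 m32 m33] in H; exact H.
Qed.
Lemma row3 n s x y z t : x = s -> y = s + 1 -> z = s + 2 -> t = n + s + 2 ->
  N n * N x + (N (n + 2) - N (n + 1)) * N y + N (n + 1) * N z = N t.
Proof.
  intros -> -> -> ->. pose proof (f_equal v3 (mvP n s (n + s) eq_refl)) as H.
  unfold mv, P, w in H; cbn [v1 v2 v3 m11 m12 m13 m21 m22 m23 m31 m32 m33] in H; exact H.
Qed.

Lemma mmPP a : mm (P a) (P (- a)) = mkM 1 0 0 0 1 0 0 0 1.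
Proof.
  unfold mm, P; cbn [m11 m12 m13 m21 m22 m23 m31 m32 m33].
  f_equal.
  - pose proof (row1 a (-a-2) (-a-2) (-a-1) (-a) (-2) ltac:(lia) ltac:(lia) ltac:(lia) ltac:(lia)) as H.
    change (N (-2)) with 1 in H. lia.
  - pose proof (row1 a (-a) (-a) (-a+1) (-a+2) 0 ltac:(lia) ltac:(lia) ltac:(lia) ltac:(lia)) as H.
    pose proof (row1 a (-a-1) (-a-1) (-a) (-a+1) (-1) ltac:(lia) ltac:(lia) ltac:(lia) ltac:(lia)) as H'.
    change (N 0) with 0 in H. change (N (-1)) with 0 in H'. lia.
  - pose proof (row1 a (-a-1) (-a-1) (-a) (-a+1) (-1) ltac:(lia) ltac:(lia) ltac:(lia) ltac:(lia)) as H.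
    change (N (-1)) with 0 in H. lia.
  - pose proof (row2 a (-a-2) (-a-2) (-a-1) (-a) (-1) ltac:(lia) ltac:(lia) ltac:(lia) ltac:(lia)) as H.
    change (N (-1)) with 0 in H. lia.
  - pose proof (row2 a (-a) (-a) (-a+1) (-a+2) 1 ltac:(lia) ltac:(lia) ltac:(lia) ltac:(lia)) as H.
    pose proof (row2 a (-a-1) (-a-1) (-a) (-a+1) 0 ltac:(lia) ltac:(lia) ltac:(lia) ltac:(lia)) as H'.
    change (N 1) with 1 in H. change (N 0) with 0 in H'. lia.
  - pose proof (row2 a (-a-1) (-a-1) (-a) (-a+1) 0 ltac:(lia) ltac:(lia) ltac:(lia) ltac:(lia)) as H.
    change (N 0) with 0 in H. lia.
  - pose proof (row3 a (-a-2) (-a-2) (-a-1) (-a) 0 ltac:(lia) ltac:(lia) ltac:(lia) ltac:(lia)) as H.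
    change (N 0) with 0 in H. lia.
  - pose proof (row3 a (-a) (-a) (-a+1) (-a+2) 2 ltac:(lia) ltac:(lia) ltac:(lia) ltac:(lia)) as H.
    pose proof (row3 a (-a-1) (-a-1) (-a) (-a+1) 1 ltac:(lia) ltac:(lia) ltac:(lia) ltac:(lia)) as H'.
    change (N 2) with 1 in H. change (N 1) with 1 in H'. lia.
  - pose proof (row3 a (-a-1) (-a-1) (-a) (-a+1) 1 ltac:(lia) ltac:(lia) ltac:(lia) ltac:(lia)) as H.
    change (N 1) with 1 in H. lia.
Qed.

Lemma e2P a : e2M (P a) = p_ (- a).
Proof. rewrite <- (tadj_I (P a)), <- (mmPP a), tadj_mm, detP, trP; ring. Qed.

Theorem theorem3 : forall a m : Z, 0 < a -> a < m ->
  Narayana m = p_ a * Narayana (m - a) + q_ a * Narayana (m - 2 * a) + Narayana (m - 3 * a).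
Proof.
  intros a m _ _.
  pose proof (CH (P a) (w (m - 3 * a))) as H.
  rewrite (mvP a (m - 3 * a) (m - 2 * a)) in H by ring.
  rewrite (mvP a (m - 2 * a) (m - a)) in H by ring.
  rewrite (mvP a (m - a) m) in H by ring.
  rewrite trP, detP, e2P in H.
  unfold w in H; cbn [v1] in H. unfold q_. lia.
Qed.
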